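(* Let $\varepsilon>0$, $b>0$, $r_c\ge 0$ with $r_c<b$, and $\omega>0$. Consider the matrix $$A=\begin{pmatrix} 0 & \omega^2 & 0 \\ -\omega^2 - \varepsilon \frac{r_c^2 - b^2}{(b^2 + r_c^2)^2} & 0 & 0\\ 0 & -\frac{\varepsilon b}{b^2 + r_c^2} & 0 \end{pmatrix},$$ which governs the linearized growth rates $\mu$ of perturbations $\delta e^{\mu t}(\alpha\cos\omega s,\beta\cos\omega s,\gamma\sin\omega s)$ of the straight-line solution $\mathbf{X}(s,t)=b\mathbf{e}_1 - \varepsilon\frac{b}{b^2+r_c^2} t\,\mathbf{e}_2 + s\mathbf{e}_3$ of the equation $\mathbf{X}_t = \frac{\mathbf{X}_s \wedge \mathbf{X}_{ss}}{|\mathbf{X}_s|^3} - \frac{\varepsilon x_1}{x_1^2 + r_c^2} \frac{\mathbf{X}_s\wedge \mathbf{e}_1 }{|\mathbf{X}_s|}$. Then $A$ has an eigenvalue with positive real part if and only if $$\omega < \frac{\sqrt{\varepsilon (b^2 - r_c^2)}}{b^2 + r_c^2},$$ equivalently, the wavelength $\lambda=2\pi/\omega$ satisfies $\lambda > \frac{2 \pi b}{\sqrt{\varepsilon}}\,\frac{1 + (r_c / b)^2}{\sqrt{1 - (r_c / b)^2}}$.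
   Context: $\mathbf{e}_1,\mathbf{e}_2,\mathbf{e}_3$ is the standard basis of $\mathbb{R}^3$, $\wedge$ is the cross product, $x_1$ is the first component of $\mathbf{X}$. Instability of the straight-line pair means some eigenvalue of $A$ has positive real part. *)

(* Defs.v *)
From HB Require Import structures.
From mathcomp Require Import all_boot all_order all_algebra.
From mathcomp Require Import complex.
From mathcomp Require Import reals trigo.
Set Implicit Arguments. Unset Strict Implicit. Unset Printing Implicit Defensive.
Import Order.TTheory GRing.Theory Num.Theory.
Local Open Scope ring_scope.

Definition Amat (R : realType) (eps b rc w : R) : 'M[R]_3 :=
  \matrix_(i < 3, j < 3)
    match nat_of_ord i, nat_of_ord j with
    | 0%N, 1%N => w ^+ 2
    | 1%N, 0%N => - w ^+ 2 - eps * (rc ^+ 2 - b ^+ 2) / (b ^+ 2 + rc ^+ 2) ^+ 2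
    | 2%N, 1%N => - (eps * b / (b ^+ 2 + rc ^+ 2))
    | _, _ => 0
    end.

Definition complex_eigenvalue (R : realType) (n : nat) (M : 'M[R]_n) (mu : R[i]) :=
  eigenvalue (map_mx (real_complex R) M) mu.

Definition unstable (R : realType) (n : nat) (M : 'M[R]_n) :=
  exists mu : R[i], complex_eigenvalue M mu /\ 0 < complex.Re mu.

(* Main.v *)
Require Import Defs.
From HB Require Import structures.
From mathcomp Require Import all_boot all_order all_algebra.
From mathcomp Require Import complex.
From mathcomp Require Import reals trigo.
From mathcomp Require Import ring.
Import Order.TTheory GRing.Theory Num.Theory.
Local Open Scope ring_scope.
Local Open Scope complex_scope.

Lemma eqs (R : realType) (eps b rc w : R) (a : R[i]) (v : 'rV[R[i]]_3) :
  let c := - w ^+ 2 - eps * (rc ^+ 2 - b ^+ 2) / (b ^+ 2 + rc ^+ 2) ^+ 2 in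
  let d := - (eps * b / (b ^+ 2 + rc ^+ 2)) in
  (v *m map_mx (real_complex R) (Amat eps b rc w) = a *: v) <->
  [/\ c%:C * v 0 1 = a * v 0 0, (w^+2)%:C * v 0 0 + d%:C * v 0 2 = a * v 0 1
     & 0 = a * v 0 2].
Proof.
move=> c d; split.
  move=> h.
  have hj := fun j : 'I_3 => congr1 (fun m : 'rV[R[i]]_3 => m 0 j) h.
  have h0 := hj 0; have h1 := hj 1; have h2 := hj 2.
  have E0 : ord0 = 0 :> 'I_3 by apply: val_inj.
  have E1 : lift ord0 ord0 = 1 :> 'I_3 by apply: val_inj.
  have E2 : lift ord0 (lift ord0 ord0) = 2 :> 'I_3 by apply: val_inj.
  move: h0 h1 h2; rewrite !(mxE, big_ord_recl, big_ord0) /= E0 E1 E2 !rmorph0 !mulr0 !addr0 !add0r.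
  move=> <- <- <-; split; rewrite ?(mulrC c%:C) ?(mulrC (w ^+ 2)%:C) ?(mulrC d%:C) // ; by rewrite mulr0.
move=> [h0 h1 h2]; apply/rowP => j; rewrite !(mxE, big_ord_recl, big_ord0) /=.
have E0 : ord0 = 0 :> 'I_3 by apply: val_inj.
have E1 : lift ord0 ord0 = 1 :> 'I_3 by apply: val_inj.
have E2 : lift ord0 (lift ord0 ord0) = 2 :> 'I_3 by apply: val_inj.
rewrite E0 E1 E2.
case: j => [[|[|[|j]]] hj] //=.
- have -> : Ordinal hj = 0 by apply: val_inj.
  by rewrite !rmorph0 !mulr0 !addr0 add0r mulrC.
- have -> : Ordinal hj = 1 by apply: val_inj.
  by rewrite !rmorph0 !mulr0 !addr0 add0r -h1 mulrC (mulrC (v 0 2)).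
- have -> : Ordinal hj = 2 by apply: val_inj.
  by rewrite !rmorph0 !mulr0 !addr0 -h2.
Qed.

Lemma key (R : realType) (eps b rc w : R) : 0 < w ->
  unstable (Amat eps b rc w) <->
  0 < - w ^+ 2 - eps * (rc ^+ 2 - b ^+ 2) / (b ^+ 2 + rc ^+ 2) ^+ 2.
Proof.
move=> w0.
set c := - w ^+ 2 - _.
set d := - (eps * b / (b ^+ 2 + rc ^+ 2)).
split.
  move=> [a [/eigenvalueP [v hv vnz] hRe]].
  have [h0 h1 h2] := (eqs R eps b rc w a v).1 hv.
  have anz : a != 0 by apply: contraTneq hRe => ->; rewrite ltxx.
  have v2 : v 0 2 = 0.
    by move/esym/eqP: h2; rewrite mulf_eq0 (negbTE anz) /= => /eqP.
  have e0 : (a*a - (w^+2)%:C*c%:C) * v 0 0 = 0.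
    have -> : (a*a - (w^+2)%:C*c%:C) * v 0 0 =
      a*(a*v 0 0 - c%:C*v 0 1) + c%:C*(a*v 0 1 - ((w^+2)%:C*v 0 0 + d%:C*v 0 2))
      + c%:C*d%:C*v 0 2 by ring.
    by rewrite h0 h1 v2 !subrr !mulr0 !addr0.
  have e1 : (a*a - (w^+2)%:C*c%:C) * v 0 1 = 0.
    have -> : (a*a - (w^+2)%:C*c%:C) * v 0 1 =
      a*(a*v 0 1 - ((w^+2)%:C*v 0 0 + d%:C*v 0 2)) + (w^+2)%:C*(a*v 0 0 - c%:C*v 0 1)
      + a*d%:C*v 0 2 by ring.
    by rewrite h0 h1 v2 !subrr !mulr0 !addr0.
  have aa : a * a = (w^+2 * c)%:C.
    rewrite rmorphM; apply/eqP; rewrite -subr_eq0; apply/eqP.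
    move/eqP: e0; rewrite mulf_eq0 => /orP[/eqP //|/eqP z0].
    move/eqP: e1; rewrite mulf_eq0 => /orP[/eqP //|/eqP z1].
    exfalso; move/eqP: vnz; apply; apply/rowP; case=> [[|[|[|k]]] hk] //=; rewrite mxE.
    - by rewrite -z0; congr (v 0 _); apply: val_inj.
    - by rewrite -z1; congr (v 0 _); apply: val_inj.
    - by rewrite -v2; congr (v 0 _); apply: val_inj.
  move: aa hRe; case: a {anz h0 h1 h2 e0 e1 hv} => x y /= /eqP.
  rewrite eq_complex /= => /andP[/eqP ex /eqP ey] x0.
  have y0 : y = 0.
    have : 2 * (x * y) = 0 by rewrite mulr_natl mulr2n -ey [y * x]mulrC.
    by move/eqP; rewrite !mulf_eq0 pnatr_eq0 (gt_eqF x0) /= => /eqP.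
  have : 0 < w^+2 * c by rewrite -ex y0 mulr0 subr0 mulr_gt0.
  by rewrite pmulr_rgt0 // exprn_gt0.
move=> c0.
set s := Num.sqrt (w ^+ 2 * c).
have s0 : 0 < s by rewrite sqrtr_gt0 mulr_gt0 // exprn_gt0.
exists s%:C; split; last by [].
apply/eigenvalueP.
exists (\row_(j < 3) [:: s%:C; (w^+2)%:C; 0]`_j).
  apply/(eqs R eps b rc w); rewrite !mxE /=.
split.
  - rewrite -/c -!rmorphM /= mulrC -expr2 sqr_sqrtr //.
    by rewrite ltW // mulr_gt0 // exprn_gt0.
  - by rewrite mulr0 addr0 mulrC.
  - by rewrite mulr0.
apply/eqP => /rowP /(_ 1); rewrite !mxE.
move=> /(congr1 (@complex.Re R)) /= /eqP.
by rewrite expf_eq0 (gt_eqF w0) andbF.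
Qed.

Theorem mainTheorem2 (R : realType) (eps b rc w : R) :
  0 < eps -> 0 < b -> 0 <= rc -> rc < b -> 0 < w ->
  (unstable (Amat eps b rc w) <->
     w < Num.sqrt (eps * (b ^+ 2 - rc ^+ 2)) / (b ^+ 2 + rc ^+ 2)) /\
  (unstable (Amat eps b rc w) <->
     (2 * pi) / w >
       (2 * pi * b / Num.sqrt eps) *
       ((1 + (rc / b) ^+ 2) / Num.sqrt (1 - (rc / b) ^+ 2))).
Proof.
move=> e0 b0 rc0 rcb w0.
set S := b ^+ 2 + rc ^+ 2.
set E := eps * (b ^+ 2 - rc ^+ 2).
have S0 : 0 < S by rewrite /S ltr_wpDr ?sqr_ge0 ?exprn_gt0.
have E0 : 0 < E.
  by rewrite /E mulr_gt0 // subr_gt0 ltr_pXn2r // nnegrE ltW.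
have P1 : unstable (Amat eps b rc w) <-> w < Num.sqrt E / S.
  rewrite key //.
  have -> : - w ^+ 2 - eps * (rc ^+ 2 - b ^+ 2) / (b ^+ 2 + rc ^+ 2) ^+ 2
          = E / S ^+ 2 - w ^+ 2 by rewrite /E /S; ring.
  rewrite subr_gt0.
  suff -> : (w ^+ 2 < E / S ^+ 2) = (w < Num.sqrt E / S) by [].
  rewrite [RHS]ltr_pdivlMr // [LHS]ltr_pdivlMr ?exprn_gt0 // -exprMn.
  rewrite -[E in LHS]sqr_sqrtr ?ltW // ltr_pXn2r // nnegrE ?sqrtr_ge0 //.
  by rewrite ltW // mulr_gt0.
split => //.
rewrite P1.
set p := Num.sqrt eps; set q := Num.sqrt (1 - (rc / b) ^+ 2).
have p0 : 0 < p by rewrite sqrtr_gt0.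
have h1 : 0 < 1 - (rc / b) ^+ 2.
  rewrite subr_gt0 expr_div_n ltr_pdivrMr ?exprn_gt0 // mul1r.
  by rewrite ltr_pXn2r // nnegrE ltW.
have q0 : 0 < q by rewrite sqrtr_gt0.
have bn : b != 0 by rewrite gt_eqF.
have tE : Num.sqrt E = p * q * b.
  have -> : E = (p * q * b) ^+ 2.
    rewrite !exprMn /p /q !sqr_sqrtr ?ltW // /E.
    by field.
  by rewrite sqrtr_sqr ger0_norm // ltW // !mulr_gt0.
rewrite tE.
have -> : 2 * pi * b / p * ((1 + (rc / b) ^+ 2) / q) = 2 * pi * (p * q * b / S)^-1.
  rewrite /S; field.
  by rewrite -/S !gt_eqF.
have X0 : 0 < p * q * b / S by rewrite divr_gt0 // !mulr_gt0.
rewrite ltr_pM2l ?mulr_gt0 ?pi_gt0 // ltf_pV2 ?posrE //.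
Qed.
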